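(* Let $A \in \mathbb{Z}^{(n-2)\times n}$ be an integer matrix of rank $n-2$ with $\ker_{\mathbb{Z}} A \cap \mathbb{N}^n = \{0\}$, and let $B$ be a Gale transform of $A$ whose rows $b_1,\dots,b_n$ are all nonzero. If the toric ideal $I_A$ is strongly robust, then $A$ has at least two mixed bouquets.
   Context: For $A \in \mathbb{Z}^{d\times n}$ of rank $d$, the toric ideal is $I_A = \langle p^u - p^v : u,v\in\mathbb{N}^n,\ Au = Av\rangle \subseteq \mathbb{K}[p_1,\dots,p_n]$. For $u \in \mathbb{N}^n$, $\mathcal{F}(u)=\{v\in\mathbb{N}^n : Av = Au\}$. A binomial $p^u - p^v$ is indispensable if $\mathcal{F}(u)=\{u,v\}$ and $\mathrm{supp}(u)\cap\mathrm{supp}(v)=\emptyset$; the set of these is $\mathcal{S}(A)$. A binomial $p^u-p^v\in I_A$ is primitive if there is no other binomial $p^{u'}-p^{v'}\in I_A$ with $p^{u'}\mid p^u$ and $p^{v'}\mid p^v$; the Graver basis $\mathcal{G}r(A)$ is the set of primitive binomials. $I_A$ is strongly robust if $\mathcal{S}(A)=\mathcal{G}r(A)$. A Gale transform of $A$ is an $n\times (n-d)$ integer matrix $B$ whose columns form a basis of $\ker_{\mathbb{Z}}A$, with rows $b_1,\dots,b_n$. A bouquet is a maximal subset $S\subseteq[n]$ such that $\mathrm{span}(b_s : s\in S)$ is one-dimensional. A bouquet $S$ is mixed if its vectors do not all point in the same direction, i.e. there exist $s,t\in S$ with $b_s = \lambda b_t$ for some $\lambda<0$. *)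

(* Defs.v *)
From HB Require Import structures.
From mathcomp Require Import all_boot all_order all_algebra.
Set Implicit Arguments. Unset Strict Implicit. Unset Printing Implicit Defensive.
Import Order.TTheory GRing.Theory Num.Theory.
Local Open Scope ring_scope.

Definition nvec (n : nat) (u : 'cV[int]_n) : bool := [forall i, 0 <= u i 0].

Definition supp (n : nat) (u : 'cV[int]_n) : {set 'I_n} := [set i | u i 0 != 0].

(* componentwise order, i.e. p^u' divides p^u *)
Definition le_vec (n : nat) (u' u : 'cV[int]_n) : bool := [forall i, u' i 0 <= u i 0].

(* The binomial p^u - p^v (u <> v, u v in N^n) is indispensable:
   F(u) = {u, v} and supp u, supp v disjoint. *)
Definition indispensable (d n : nat) (A : 'M[int]_(d, n)) (u v : 'cV[int]_n) : Prop :=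
  [/\ nvec u /\ nvec v, u != v,
      A *m v = A *m u,
      (forall w : 'cV[int]_n, nvec w -> A *m w = A *m u -> w = u \/ w = v)
    & [disjoint supp u & supp v]].

Definition primitive (d n : nat) (A : 'M[int]_(d, n)) (u v : 'cV[int]_n) : Prop :=
  [/\ nvec u, nvec v, u != v, A *m u = A *m v
    & forall u' v' : 'cV[int]_n, nvec u' -> nvec v' -> u' != v' ->
        A *m u' = A *m v' -> le_vec u' u -> le_vec v' v -> u' = u /\ v' = v].

(* S(A) = Gr(A) *)
Definition strongly_robust (d n : nat) (A : 'M[int]_(d, n)) : Prop :=
  forall u v : 'cV[int]_n, indispensable A u v <-> primitive A u v.

(* B is a Gale transform of A: its columns form a Z-basis of ker_Z A. *)
Definition gale_transform (d n m : nat) (A : 'M[int]_(d, n)) (B : 'M[int]_(n, m)) : Prop :=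
  [/\ A *m B = 0,
      (forall x : 'cV[int]_n, A *m x = 0 -> exists y : 'cV[int]_m, x = B *m y)
    & (forall y : 'cV[int]_m, B *m y = 0 -> y = 0)].

Definition ratmx (m n : nat) (M : 'M[int]_(m, n)) : 'M[rat]_(m, n) :=
  map_mx (intr : int -> rat) M.

(* dimension (over Q) of the span of the rows b_s, s in S *)
Definition span_dim (n m : nat) (B : 'M[int]_(n, m)) (S : {set 'I_n}) : nat :=
  \rank (\matrix_(i < n, j < m) (if i \in S then ratmx B i j else 0)).

Definition bouquet (n m : nat) (B : 'M[int]_(n, m)) (S : {set 'I_n}) : Prop :=
  span_dim B S = 1%N /\
  forall T : {set 'I_n}, S \proper T -> span_dim B T <> 1%N.

Definition mixed (n m : nat) (B : 'M[int]_(n, m)) (S : {set 'I_n}) : Prop :=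
  exists s t : 'I_n, [/\ s \in S, t \in S &
    exists lam : rat, lam < 0 /\ row s (ratmx B) = lam *: row t (ratmx B)].

(* Main.v *)
Require Import Defs.
From HB Require Import structures.
From mathcomp Require Import all_boot all_order all_algebra.
From mathcomp Require Import zify ring lra.
From Stdlib Require Import Classical.
Import Order.TTheory GRing.Theory Num.Theory.
Local Open Scope ring_scope.

Definition c0 : 'I_2 := ord0.
Definition c1 : 'I_2 := ord_max.

Lemma I2_cases (c : 'I_2) : c = c0 \/ c = c1.
Proof.
case: c => [[|[|m]] Hm]; [left|right|]; try (by apply/val_inj).
by [].
Qed.

Definition cv2 (a b : int) : 'cV[int]_2 := \col_(k < 2) (if k == c0 then a else b).

Lemma mul2 (n : nat) (B : 'M[int]_(n,2)) (y : 'cV[int]_2) k :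
  (B *m y) k 0 = B k c0 * y c0 0 + B k c1 * y c1 0.
Proof.
rewrite mxE big_ord_recl big_ord1 /=.
congr (_ + _). congr (B k _ * y _ 0); by apply/val_inj.
Qed.

Lemma cv2E0 a b : cv2 a b c0 0 = a. Proof. by rewrite mxE. Qed.
Lemma cv2E1 a b : cv2 a b c1 0 = b. Proof. by rewrite mxE. Qed.

Lemma cv2_eq0 a b : cv2 a b = 0 -> a = 0 /\ b = 0.
Proof.
move=> H. have := congr1 (fun M : 'cV[int]_2 => M c0 0) H.
have := congr1 (fun M : 'cV[int]_2 => M c1 0) H.
by rewrite /= !mxE.
Qed.

Lemma witness_false (d n : nat) (A : 'M[int]_(d, n)) (B : 'M[int]_(n, 2))
  (HAB : A *m B = 0)
  (HL : forall x : 'cV[int]_n, A *m x = 0 -> exists y, x = B *m y)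
  (Hinj : forall y : 'cV[int]_2, B *m y = 0 -> y = 0)
  (HSR : strongly_robust A)
  (i : 'I_n) (g z1 z2 s1 s2 : int)
  (Hg : 0 < g) (Hb1 : B i c0 = g * z1) (Hb2 : B i c1 = g * z2)
  (Hdet : z1 * s2 - z2 * s1 = 1)
  (Hw : forall k, s1 * B k c1 - s2 * B k c0 <= Num.max (z1 * B k c1 - z2 * B k c0) 0) :
  False.
Proof.
set y := cv2 (- z2) z1.
have [x Hxd] : exists x, x = B *m y by eexists.
have Hx : forall k, x k 0 = z1 * B k c1 - z2 * B k c0.
  move=> k; rewrite Hxd mul2 /y cv2E0 cv2E1; ring.
set u : 'cV[int]_n := \col_k Num.max (x k 0) 0.
set v : 'cV[int]_n := \col_k Num.max (- x k 0) 0.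
have Huv : u - v = x.
  apply/matrixP => k j; rewrite (ord1 j) !mxE. move: (x k 0) => a. lia.
have HAx : A *m x = 0 by rewrite Hxd mulmxA HAB mul0mx.
have Hx0 : x != 0.
  apply/eqP => Hx0. rewrite Hxd in Hx0; have := Hinj y Hx0. move/cv2_eq0 => [H1 H2]. 
  move: Hdet H1 H2. clear. move=> Hdet H1 H2. rewrite H2 in Hdet. have H3 : z2 = 0 by lia. rewrite H3 in Hdet. lia.
have Hprim : primitive A u v.
  split.
  - apply/forallP => k; rewrite mxE; lia.
  - apply/forallP => k; rewrite mxE; lia.
  - apply: contraNneq Hx0 => Heq. by rewrite -Huv Heq subrr.
  - apply/eqP; rewrite -subr_eq0 -mulmxBr Huv HAx //.
  - move=> u' v' Hu' Hv' Hne HA' Hle1 Hle2.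
    have HAx' : A *m (u' - v') = 0 by rewrite mulmxBr HA' subrr.
    have [y'' Hy''] := HL _ HAx'.
    set k := y'' c0 0 * s1 + y'' c1 0 * s2.
    have Hxi : x i 0 = 0 by rewrite Hx Hb1 Hb2; ring.
    have Hui : u' i 0 = 0.
      move/forallP: Hle1 => /(_ i); move/forallP: Hu' => /(_ i).
      rewrite !mxE Hxi; lia.
    have Hvi : v' i 0 = 0.
      move/forallP: Hle2 => /(_ i); move/forallP: Hv' => /(_ i).
      rewrite !mxE Hxi; lia.
    have Hperp : z1 * y'' c0 0 + z2 * y'' c1 0 = 0.
      have := congr1 (fun M : 'cV[int]_n => M i 0) Hy''.
      rewrite /= mul2 !mxE Hui Hvi Hb1 Hb2 subrr => /eqP.
      rewrite eq_sym -mulrA -mulrA -mulrDr mulf_eq0 gt_eqF //= => /eqP.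
      lia.
    have Hy1 : y'' c0 0 = - z2 * k.
      have -> : y'' c0 0 = y'' c0 0 * (z1 * s2 - z2 * s1) by rewrite Hdet mulr1.
      rewrite /k. move: Hperp; move: (y'' c0 0) (y'' c1 0) => a0 a1 Hp.
      apply/eqP; rewrite -subr_eq0.
      have -> : a0 * (z1 * s2 - z2 * s1) - - z2 * (a0 * s1 + a1 * s2) = s2 * (z1 * a0 + z2 * a1) by ring.
      by rewrite Hp mulr0.
    have Hy2 : y'' c1 0 = z1 * k.
      have -> : y'' c1 0 = y'' c1 0 * (z1 * s2 - z2 * s1) by rewrite Hdet mulr1.
      rewrite /k. move: Hperp; move: (y'' c0 0) (y'' c1 0) => a0 a1 Hp.
      apply/eqP; rewrite -subr_eq0.
      have -> : a1 * (z1 * s2 - z2 * s1) - z1 * (a0 * s1 + a1 * s2) = - s1 * (z1 * a0 + z2 * a1) by ring.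
      by rewrite Hp mulr0.
    have Hcomp : forall q, u' q 0 - v' q 0 = k * x q 0.
      move=> q. have := congr1 (fun M : 'cV[int]_n => M q 0) Hy''.
      rewrite /= mul2 !mxE Hy1 Hy2 Hx => ->; ring.
    have Hbnd : forall q, 0 <= u' q 0 <= Num.max (x q 0) 0 /\ 0 <= v' q 0 <= Num.max (- x q 0) 0.
      move=> q; move/forallP: Hle1 => /(_ q); move/forallP: Hu' => /(_ q).
      move/forallP: Hle2 => /(_ q); move/forallP: Hv' => /(_ q).
      rewrite !mxE => ? ? ? ?; split; apply/andP; split => //.
    have [p Hp] : exists p, x p 0 != 0.
      apply/existsP; move: Hx0; apply: contraNT; rewrite negb_exists => /forallP H.
      apply/eqP/matrixP => q j; rewrite (ord1 j) mxE. by move: (H q); rewrite negbK => /eqP.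
    have Hk : k = 0 \/ k = 1.
      have := Hcomp p; have := Hbnd p; move: Hp; move: (x p 0) (u' p 0) (v' p 0) => a b c.
      move=> Ha [/andP[Hb Hb'] /andP[Hc Hc']] Heq.
      have : a != 0 := Ha. move=> /eqP Ha0.
      case: (ltrgtP a 0) => Hs; last by exfalso; apply: Ha0.
      + have Hb0 : b = 0 by lia.
        have : 0 <= k * (- a) <= - a by nia.
        move=> /andP [H1 H2]. nia.
      + have Hc0 : c = 0 by lia.
        have : 0 <= k * a <= a by nia.
        move=> /andP [H1 H2]. nia.
    case: Hk => Hk.
    + exfalso; move/eqP: Hne; apply.
      apply/matrixP => q j; rewrite (ord1 j). have := Hcomp q; rewrite Hk mul0r; move: (u' q 0) (v' q 0) => a b; lia.
    + split; apply/matrixP => q j; rewrite (ord1 j) !mxE;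
        have := Hcomp q; have := Hbnd q; rewrite Hk mul1r; move: (u' q 0) (v' q 0) (x q 0) => a b e; lia.
have [_ _ _ Hfib _] := (HSR u v).2 Hprim.
set y' := cv2 (- s2) s1.
have Hmul : B *m y' = \col_k (s1 * B k c1 - s2 * B k c0).
  apply/matrixP => k j; rewrite (ord1 j) mul2 /y' cv2E0 cv2E1 mxE; ring.
have Hnw : nvec (u - B *m y').
  apply/forallP => k; rewrite Hmul !mxE Hx.
  have := Hw k. move: (s1 * B k c1 - s2 * B k c0) (z1 * B k c1 - z2 * B k c0) => a b. lia.
have HAw : A *m (u - B *m y') = A *m u by rewrite mulmxBr mulmxA HAB mul0mx subr0.
case: (Hfib _ Hnw HAw) => Heq.
- have Heq' : u - B *m y' = u - 0 by rewrite subr0.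
  move/addrI/oppr_inj: Heq'; move/Hinj/cv2_eq0 => [H1 H2].
  move: Hdet; rewrite H2 (_ : s2 = 0); [lia | lia].
- have HB0 : B *m (y - y') = 0.
    rewrite mulmxBr -Hxd -Huv -Heq. by rewrite opprB addrCA subrr addr0 subrr.
  move/Hinj/eqP: HB0; rewrite subr_eq0 => /eqP Hyy.
  have E0 := congr1 (fun M : 'cV[int]_2 => M c0 0) Hyy.
  have E1 := congr1 (fun M : 'cV[int]_2 => M c1 0) Hyy.
  move: E0 E1; rewrite /= /y /y' !cv2E0 !cv2E1 => E0 E1.
  move: Hdet; rewrite -E1 (_ : s2 = z2); last by lia.
  move=> H; have : z1 * z2 - z2 * z1 = 0 by ring. lia.
Qed.

Lemma core_ineq (a c K L2 t : int) : 0 < K -> t * K <= L2 -> L2 < (t + 1) * K ->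
  - a * K + c * L2 < K -> - a + (t + 1) * c <= Num.max c 0.
Proof.
move=> HK H1 H2 H3.
case: (lerP c 0) => Hc.
- have h : c * L2 >= c * ((t + 1) * K) by rewrite ler_wnM2l // ltW.
  have h2 : (c * (t + 1) - a - 1) * K < 0.
    move: h H3. move: (c * L2) => cl. move=> h H3.
    have -> : (c * (t + 1) - a - 1) * K = c * ((t + 1) * K) - a * K - K by ring.
    lia.
  have : c * (t + 1) - a - 1 < 0 by rewrite -(pmulr_rlt0 _ HK) mulrC.
  lia.
- have h : c * L2 >= c * (t * K) by rewrite ler_pM2l.
  have h2 : (c * t - a - 1) * K < 0.
    move: h H3. move: (c * L2) => cl. move=> h H3.
    have -> : (c * t - a - 1) * K = c * (t * K) - a * K - K by ring.
    lia.
  have : c * t - a - 1 < 0 by rewrite -(pmulr_rlt0 _ HK) mulrC.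
  lia.
Qed.

Lemma final_ineq (e gg cc : int) : e <= Num.max cc 0 -> 0 < gg -> gg * e <= Num.max (gg * cc) 0.
Proof.
case: (lerP cc 0) => Hcc.
- move=> He Hgg. rewrite max_r; last by rewrite pmulr_rle0.
  by rewrite pmulr_rle0.
- move=> He Hgg. rewrite max_l; last by rewrite pmulr_rge0 // ltW.
  by rewrite ler_pM2l.
Qed.

Lemma sep_sigma (n : nat) (B : 'M[int]_(n,2)) (g r1 r2 : 'I_n -> int)
 (Hg : forall k, 0 < g k) (Hb1 : forall k, B k c0 = g k * r1 k) (Hb2 : forall k, B k c1 = g k * r2 k)
 (i : 'I_n) (s1 s2 : int) (Hdet : r1 i * s2 - r2 i * s1 = 1)
 (l1 l2 : int) (Hsep : forall j, l1 * r1 j + l2 * r2 j < - (l1 * r1 i + l2 * r2 i))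
 (Hpos : exists p, 0 < l1 * r1 p + l2 * r2 p) :
 exists t1 t2, r1 i * t2 - r2 i * t1 = 1 /\
   forall k, t1 * B k c1 - t2 * B k c0 <= Num.max (r1 i * B k c1 - r2 i * B k c0) 0.
Proof.
move: Hdet Hsep. set z1 := r1 i. set z2 := r2 i. move=> Hdet Hsep.
set K := - (l1 * z1 + l2 * z2).
have HK : 0 < K.
  case: Hpos => p Hp. have := Hsep p. rewrite -/K. lia.
set L2 := l1 * s1 + l2 * s2.
set t := (L2 %/ K)%Z.
have Ht1 : t * K <= L2 by apply: lez_floor; rewrite gt_eqF.
have Ht2 : L2 < (t + 1) * K by apply: ltz_ceil.
exists (s1 + (t + 1) * z1), (s2 + (t + 1) * z2). split.
  have -> : z1 * (s2 + (t + 1) * z2) - z2 * (s1 + (t + 1) * z1) = z1 * s2 - z2 * s1 by ring.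
  exact: Hdet.
move=> k. rewrite Hb1 Hb2.
set p1 := r1 k. set p2 := r2 k.
set a := p1 * s2 - p2 * s1. set c := z1 * p2 - z2 * p1.
have E1 : p1 = a * z1 + c * s1.
  have -> : a * z1 + c * s1 = p1 * (z1 * s2 - z2 * s1) by rewrite /a /c; ring.
  by rewrite Hdet mulr1.
have E2 : p2 = a * z2 + c * s2.
  have -> : a * z2 + c * s2 = p2 * (z1 * s2 - z2 * s1) by rewrite /a /c; ring.
  by rewrite Hdet mulr1.
have Hid : l1 * p1 + l2 * p2 = - a * K + c * L2.
  rewrite {1}E1 {1}E2 /K /L2; ring.
have Hs := Hsep k. rewrite -/p1 -/p2 -/K Hid in Hs.
have Hc := core_ineq _ _ _ _ _ HK Ht1 Ht2 Hs.
have -> : (s1 + (t + 1) * z1) * (g k * p2) - (s2 + (t + 1) * z2) * (g k * p1)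
   = g k * (- a + (t + 1) * c) by rewrite /a /c; ring.
have -> : z1 * (g k * p2) - z2 * (g k * p1) = g k * c by rewrite /c; ring.
exact: final_ineq _ _ _ Hc (Hg k).
Qed.


Lemma term_le_sum (n : nat) (f : 'I_n -> int) q : (forall p, 0 <= f p) -> f q <= \sum_(p < n) f p.
Proof.
move=> H. rewrite (bigD1 q) //= lerDl. by apply: sumr_ge0 => p _.
Qed.

Lemma mu_step (n : nat) (r1 r2 : 'I_n -> int)
  (HB : forall l1 l2 i, exists j, - (l1 * r1 i + l2 * r2 i) <= l1 * r1 j + l2 * r2 j)
  (l1 l2 : int) (i j0 : 'I_n)
  (Huniq : forall j, l1 * r1 j + l2 * r2 j < l1 * r1 i + l2 * r2 i \/ (r1 j = r1 i /\ r2 j = r2 i))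
  (Hj0 : l1 * r1 j0 + l2 * r2 j0 = - (l1 * r1 i + l2 * r2 i))
  (m1 m2 : int) (Hm : forall q, `|m1 * r1 q + m2 * r2 q| <= `|r1 q| + `|r2 q|) :
  - (m1 * r1 i + m2 * r2 i) <= m1 * r1 j0 + m2 * r2 j0.
Proof.
set S := \sum_(p < n) (`|r1 p| + `|r2 p|).
have HS : forall q, `|m1 * r1 q + m2 * r2 q| <= S.
  move=> q. apply: le_trans (Hm q) _. apply: (term_le_sum _ (fun p => `|r1 p| + `|r2 p|) q).
  move=> p; lia.
set k := 1 + 2 * S.
have Hphi : forall q, (k * l1 + m1) * r1 q + (k * l2 + m2) * r2 q
   = k * (l1 * r1 q + l2 * r2 q) + (m1 * r1 q + m2 * r2 q) by move=> q; ring.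
have [j3 Hj3] := HB (k * l1 + m1) (k * l2 + m2) j0.
rewrite !Hphi in Hj3.
have Hmax : k * (l1 * r1 j3 + l2 * r2 j3) + (m1 * r1 j3 + m2 * r2 j3)
    <= k * (l1 * r1 i + l2 * r2 i) + (m1 * r1 i + m2 * r2 i).
  case: (Huniq j3) => [Hlt|[E1 E2]]; last by rewrite E1 E2.
  have h1 := HS j3. have h2 := HS i.
  have hk : k * (l1 * r1 j3 + l2 * r2 j3) <= k * (l1 * r1 i + l2 * r2 i) - k.
    have -> : k * (l1 * r1 i + l2 * r2 i) - k = k * (l1 * r1 i + l2 * r2 i - 1) by ring.
    rewrite ler_pM2l; last by rewrite /k; have := HS i; lia.
    lia.
  move: hk h1 h2. rewrite /k.
  move: (k * (l1 * r1 j3 + l2 * r2 j3)) (k * (l1 * r1 i + l2 * r2 i)) (m1 * r1 j3 + m2 * r2 j3) (m1 * r1 i + m2 * r2 i) => A1 A2 A3 A4.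
  lia.
move: Hj3 Hmax; rewrite Hj0.
move: (l1 * r1 i + l2 * r2 i) (l1 * r1 j3 + l2 * r2 j3) => L Lj. 
move: (m1 * r1 i + m2 * r2 i) (m1 * r1 j0 + m2 * r2 j0) (m1 * r1 j3 + m2 * r2 j3) => M0 M1 M3.
have -> : k * - L = - (k * L) by ring.
move: (k * L) (k * Lj) => kL kLj. lia.
Qed.

Lemma exposed_mixed (n : nat) (r1 r2 : 'I_n -> int)
  (HB : forall l1 l2 i, exists j, - (l1 * r1 i + l2 * r2 i) <= l1 * r1 j + l2 * r2 j)
  (l1 l2 : int) (i : 'I_n)
  (Huniq : forall j, l1 * r1 j + l2 * r2 j < l1 * r1 i + l2 * r2 i \/ (r1 j = r1 i /\ r2 j = r2 i)) :
  exists j, r1 j = - r1 i /\ r2 j = - r2 i.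
Proof.
have Hle : forall j, l1 * r1 j + l2 * r2 j <= l1 * r1 i + l2 * r2 i.
  move=> j; case: (Huniq j) => [/ltW //|[-> ->] //].
have [j0 Hj0] : exists j0, l1 * r1 j0 + l2 * r2 j0 = - (l1 * r1 i + l2 * r2 i).
  have [j Hj] := HB (- l1) (- l2) i.
  have [j2 Hj2] := HB l1 l2 j.
  have H := Hle j2. exists j.
  move: H Hj Hj2. 
  have -> : - (- l1 * r1 i + - l2 * r2 i) = l1 * r1 i + l2 * r2 i by ring.
  have -> : - l1 * r1 j + - l2 * r2 j = - (l1 * r1 j + l2 * r2 j) by ring.
  move: (l1 * r1 i + l2 * r2 i) (l1 * r1 j + l2 * r2 j) (l1 * r1 j2 + l2 * r2 j2) => a b c.
  lia.
exists j0.
have H1 := mu_step _ _ _ HB _ _ _ _ Huniq Hj0 1 0 ltac:(move=> q; lia).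
have H2 := mu_step _ _ _ HB _ _ _ _ Huniq Hj0 (-1) 0 ltac:(move=> q; lia).
have H3 := mu_step _ _ _ HB _ _ _ _ Huniq Hj0 0 1 ltac:(move=> q; lia).
have H4 := mu_step _ _ _ HB _ _ _ _ Huniq Hj0 0 (-1) ltac:(move=> q; lia).
move: H1 H2 H3 H4. rewrite !mul1r !mul0r !addr0 !add0r !mulN1r.
move: (r1 i) (r1 j0) (r2 i) (r2 j0) => a b c e. lia.
Qed.



Lemma argmax_ex (n : nat) (i0 : 'I_n) (f : 'I_n -> int) : exists i, forall j, f j <= f i.
Proof.
case: (@arg_maxP _ _ _ i0 predT f isT) => i _ H. exists i => j. exact: H.
Qed.

Lemma small_mul (K dl E : int) : 0 < K -> K * dl = E -> `|E| < K -> dl = 0.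
Proof.
move=> HK HE Hlt. case: (ltrgtP dl 0) => // Hd.
- have : K * dl <= K * (-1) by rewrite ler_pM2l // ; lia.
  rewrite mulrN1.
  lia.
- have : K <= K * dl by rewrite ler_pMr //; lia.
  lia.
Qed.

Lemma exposed1 (n : nat) (i0 : 'I_n) (r1 r2 : 'I_n -> int) :
  exists l1 l2 i, forall j, l1 * r1 j + l2 * r2 j < l1 * r1 i + l2 * r2 i \/ (r1 j = r1 i /\ r2 j = r2 i).
Proof.
set S := \sum_(p < n) `|r2 p|.
have HS : forall q, `|r2 q| <= S by move=> q; apply: (term_le_sum _ (fun p => `|r2 p|) q) => p.
set K := 1 + 2 * S.
have [i Hi] := argmax_ex _ i0 (fun q => K * r1 q + 1 * r2 q).
exists K, 1, i => j. have := Hi j. rewrite /= le_eqVlt => /orP [/eqP Heq|]; last by left.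
right.
have Hd : r1 j - r1 i = 0.
  apply: (small_mul K _ (r2 i - r2 j)).
  - have := HS i; rewrite /K; lia.
  - move: Heq. move: (r1 j) (r1 i) (r2 j) (r2 i) => a b c e. rewrite !mul1r => H.
    have -> : K * (a - b) = K * a - K * b by ring.
    move: (K * a) (K * b) H => Ka Kb. lia.
  - have := HS i; have := HS j. rewrite /K. move: (r2 i) (r2 j) => a b. lia.
split; first by lia.
move: Heq; rewrite (_ : r1 j = r1 i); last by lia.
rewrite !mul1r. move: (K * r1 i) => x. lia.
Qed.

Lemma exposed2 (n : nat) (i0 : 'I_n) (r1 r2 : 'I_n -> int) (a1 a2 : int)
  (Ha : a1 != 0 \/ a2 != 0) (Hp : exists p, 0 < a1 * r2 p - a2 * r1 p) :
  exists l1 l2 i, (forall j, l1 * r1 j + l2 * r2 j < l1 * r1 i + l2 * r2 i \/ (r1 j = r1 i /\ r2 j = r2 i))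
    /\ 0 < a1 * r2 i - a2 * r1 i.
Proof.
set C := \sum_(p < n) `|a1 * r1 p + a2 * r2 p|.
have HC : forall q, `|a1 * r1 q + a2 * r2 q| <= C
  by move=> q; apply: (term_le_sum _ (fun p => `|a1 * r1 p + a2 * r2 p|) q) => p.
set K := 1 + 2 * C.
have HK : 0 < K by have := HC i0; rewrite /K; lia.
have Hlam : forall q, (- K * a2 + a1) * r1 q + (K * a1 + a2) * r2 q
   = K * (a1 * r2 q - a2 * r1 q) + (a1 * r1 q + a2 * r2 q) by move=> q; ring.
have [i Hi] := argmax_ex _ i0 (fun q => (- K * a2 + a1) * r1 q + (K * a1 + a2) * r2 q).
exists (- K * a2 + a1), (K * a1 + a2), i. split.
- move=> j. have := Hi j. rewrite /= le_eqVlt => /orP [/eqP Heq|]; last by left.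
  right. rewrite !Hlam in Heq.
  have HD : (a1 * r2 j - a2 * r1 j) - (a1 * r2 i - a2 * r1 i) = 0.
    apply: (small_mul K _ ((a1 * r1 i + a2 * r2 i) - (a1 * r1 j + a2 * r2 j)) HK).
    + move: Heq. move: (a1 * r2 j - a2 * r1 j) (a1 * r2 i - a2 * r1 i) => Dj Di.
      move: (a1 * r1 i + a2 * r2 i) (a1 * r1 j + a2 * r2 j) => ei ej H.
      have -> : K * (Dj - Di) = K * Dj - K * Di by ring.
      move: (K * Dj) (K * Di) H => x y. lia.
    + have := HC i; have := HC j. rewrite /K.
      move: (a1 * r1 i + a2 * r2 i) (a1 * r1 j + a2 * r2 j) => x y. lia.
  have HE : (a1 * r1 j + a2 * r2 j) - (a1 * r1 i + a2 * r2 i) = 0.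
    move: Heq HD. move: (a1 * r2 j - a2 * r1 j) (a1 * r2 i - a2 * r1 i) => Dj Di.
    move=> H1 H2. rewrite (_ : Dj = Di) in H1; last by lia.
    move: H1. move: (K * Di) => x. lia.
  have Hq : a1 ^+ 2 + a2 ^+ 2 != 0.
    case: Ha => Ha; rewrite paddr_eq0 ?sqr_ge0 // negb_and ?sqrf_eq0 Ha ?orbT //.
  split.
  + have : (a1 ^+ 2 + a2 ^+ 2) * (r1 j - r1 i) = 0.
      have -> : (a1 ^+ 2 + a2 ^+ 2) * (r1 j - r1 i) = a1 * ((a1 * r1 j + a2 * r2 j) - (a1 * r1 i + a2 * r2 i)) - a2 * ((a1 * r2 j - a2 * r1 j) - (a1 * r2 i - a2 * r1 i)) by ring.
      by rewrite HE HD !mulr0 subr0.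
    move/eqP; rewrite mulf_eq0 (negbTE Hq) /= subr_eq0 => /eqP //.
  + have : (a1 ^+ 2 + a2 ^+ 2) * (r2 j - r2 i) = 0.
      have -> : (a1 ^+ 2 + a2 ^+ 2) * (r2 j - r2 i) = a2 * ((a1 * r1 j + a2 * r2 j) - (a1 * r1 i + a2 * r2 i)) + a1 * ((a1 * r2 j - a2 * r1 j) - (a1 * r2 i - a2 * r1 i)) by ring.
      by rewrite HE HD !mulr0 addr0.
    move/eqP; rewrite mulf_eq0 (negbTE Hq) /= subr_eq0 => /eqP //.
- case: Hp => p Hp. have := Hi p. rewrite /= !Hlam.
  have := HC i; have := HC p.
  move: (a1 * r2 i - a2 * r1 i) (a1 * r2 p - a2 * r1 p) Hp => Di Dp Hp.
  move: (a1 * r1 i + a2 * r2 i) (a1 * r1 p + a2 * r2 p) => ei ep.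
  move=> h1 h2 h3.
  case: (lerP Di 0) => // HDi.
  have H4 : K * Di <= 0 by rewrite pmulr_rle0.
  have H5 : K <= K * Dp by rewrite ler_pMr //; lia.
  move: h1 h2 h3 H4 H5 HK. rewrite /K. move: (K * Di) (K * Dp) => x y. lia.
Qed.

Definition Sdir (n : nat) (B : 'M[int]_(n,2)) (a1 a2 : int) : {set 'I_n} :=
  [set k | a1 * B k c1 - a2 * B k c0 == 0].

Arguments Sdir {n}.
Definition Mset (n : nat) (B : 'M[int]_(n,2)) (S : {set 'I_n}) : 'M[rat]_(n,2) :=
  \matrix_(i < n, j < 2) (if i \in S then ratmx B i j else 0).

Arguments Mset {n}.
Lemma par_coef (a1 a2 b1 b2 : int) : a1 * b2 = a2 * b1 -> (a1 != 0 \/ a2 != 0) ->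
  exists c : rat, (b1%:~R = c * a1%:~R) /\ (b2%:~R = c * a2%:~R).
Proof.
move=> H [Ha|Ha].
- exists (b1%:~R / a1%:~R). have Ha' : (a1%:~R : rat) != 0 by rewrite intr_eq0.
  split; first by rewrite divfK.
  apply: (mulfI Ha'). rewrite mulrA mulrCA divff // mulr1 -!intrM H. by rewrite mulrC.
- exists (b2%:~R / a2%:~R). have Ha' : (a2%:~R : rat) != 0 by rewrite intr_eq0.
  split; last by rewrite divfK.
  apply: (mulfI Ha'). rewrite mulrA mulrCA divff // mulr1 -!intrM -H. by rewrite mulrC.
Qed.

Lemma bouquet_dir (n : nat) (B : 'M[int]_(n,2)) (a1 a2 : int) (Ha : a1 != 0 \/ a2 != 0)
  (i : 'I_n) (g : int) (Hg : 0 < g) (Hb1 : B i c0 = g * a1) (Hb2 : B i c1 = g * a2) :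
  bouquet B (Sdir B a1 a2).
Proof.
have HiS : i \in Sdir B a1 a2 by rewrite inE Hb1 Hb2; apply/eqP; ring.
have Hrow : forall S : {set 'I_n}, i \in S -> row i (Mset B S) != 0.
  move=> S HS; apply/eqP => H0.
  have E0 := congr1 (fun M : 'rV[rat]_2 => M 0 c0) H0.
  have E1 := congr1 (fun M : 'rV[rat]_2 => M 0 c1) H0.
  move: E0 E1; rewrite /= /ratmx !mxE HS /= Hb1 Hb2 !intrM => /eqP E0 /eqP E1.
  move: E0 E1; rewrite !mulf_eq0 !intr_eq0 (gt_eqF Hg) /=.
  by case: Ha => /negbTE -> .
split.
- rewrite /span_dim -/(Mset B _). apply/eqP; rewrite eqn_leq; apply/andP; split.
  + set w : 'rV[rat]_2 := \row_j (if j == c0 then a1%:~R else a2%:~R).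
    suff Hsub : (Mset B (Sdir B a1 a2) <= w)%MS.
      exact: leq_trans (mxrankS Hsub) (rank_leq_row w).
    apply/row_subP => k; apply/sub_rVP.
    case Hk : (k \in Sdir B a1 a2).
    * move: Hk; rewrite inE subr_eq0 => /eqP Hk.
      have [c [Hc1 Hc2]] := par_coef _ _ _ _ Hk Ha.
      exists c; apply/rowP => j; rewrite /Mset /ratmx !mxE.
      case: (I2_cases j) => ->; rewrite inE subr_eq0 Hk eqxx /=.
      -- by rewrite Hc1.
      -- by rewrite Hc2.
    * exists 0; apply/rowP => j; rewrite /Mset !mxE Hk mul0r //.
  + rewrite lt0n mxrank_eq0. apply: contraNneq (Hrow _ HiS) => ->. by rewrite row0.
- move=> T /properP [HST [k HkT HkS]] H1.
  have HiT : i \in T by apply: (subsetP HST).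
  have Hsub := row_sub i (Mset B T).
  have H1' : \rank (Mset B T) = 1%N := H1.
  have := mxrank_leqif_eq Hsub. rewrite rank_rV Hrow // H1'.
  case=> _ /esym /andP [_ HTi].
  have : (row k (Mset B T) <= row i (Mset B T))%MS.
    apply: submx_trans HTi. exact: row_sub.
  move/sub_rVP => [c Hc].
  have E0 := congr1 (fun M : 'rV[rat]_2 => M 0 c0) Hc.
  have E1 := congr1 (fun M : 'rV[rat]_2 => M 0 c1) Hc.
  move: E0 E1; rewrite /= /ratmx !mxE HkT HiT /= Hb1 Hb2 => E0 E1.
  move: HkS; rewrite inE subr_eq0 => /eqP; apply.
  apply: (@intr_inj rat). rewrite !intrM E0 E1 !intrM. ring.
Qed.

Lemma mixed_dir (n : nat) (B : 'M[int]_(n,2)) (a1 a2 : int) (i j : 'I_n) (gi gj : int)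
  (Hgi : 0 < gi) (Hgj : 0 < gj) (Hbi1 : B i c0 = gi * a1) (Hbi2 : B i c1 = gi * a2)
  (Hbj1 : B j c0 = gj * - a1) (Hbj2 : B j c1 = gj * - a2) : mixed B (Sdir B a1 a2).
Proof.
exists i, j; split.
- rewrite inE Hbi1 Hbi2; apply/eqP; ring.
- rewrite inE Hbj1 Hbj2; apply/eqP; ring.
- exists (- (gi%:~R / gj%:~R)). split.
  + rewrite oppr_lt0 divr_gt0 // ltr0z //.
  + have Hgj' : (gj%:~R : rat) != 0 by rewrite intr_eq0 gt_eqF.
    apply/rowP => c; rewrite /ratmx !mxE.
    case: (I2_cases c) => ->.
    * rewrite Hbi1 Hbj1 !intrM. rewrite mulrNz. field. by [].
    * rewrite Hbi2 Hbj2 !intrM mulrNz. field. by [].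
Qed.

Definition pg (a b : int) : int := gcdz a b.
Definition pr1 (a b : int) : int := (a %/ pg a b)%Z.
Definition pr2 (a b : int) : int := (b %/ pg a b)%Z.
Definition ps2 (a b : int) : int := (egcdz a b).1.
Definition ps1 (a b : int) : int := - (egcdz a b).2.

Lemma prim_props (a b : int) : (a != 0) || (b != 0) ->
  [/\ 0 < pg a b, a = pg a b * pr1 a b, b = pg a b * pr2 a b
    & pr1 a b * ps2 a b - pr2 a b * ps1 a b = 1].
Proof.
move=> Hab.
have Hg : 0 < pg a b.
  rewrite /pg lt_def gcdz_eq0 negb_and Hab /=. by rewrite /gcdz.
have Ea : a = pg a b * pr1 a b by rewrite mulrC /pr1 /pg divzK // dvdz_gcdl.
have Eb : b = pg a b * pr2 a b by rewrite mulrC /pr2 /pg divzK // dvdz_gcdr.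
split => //.
rewrite /ps1 /ps2. case: (egcdzP a b) => u v Huv _ /=.
have : pg a b * (pr1 a b * u - pr2 a b * - v - 1) = 0.
  have -> : pg a b * (pr1 a b * u - pr2 a b * - v - 1)
     = u * (pg a b * pr1 a b) + v * (pg a b * pr2 a b) - pg a b by ring.
  by rewrite -Ea -Eb Huv /pg subrr.
move/eqP; rewrite mulf_eq0 (gt_eqF Hg) /= subr_eq0 => /eqP //.
Qed.

Theorem corollary1p2 (d : nat) (A : 'M[int]_(d, d.+2)) (B : 'M[int]_(d.+2, 2)) :
  \rank (ratmx A) = d ->
  (forall x : 'cV[int]_(d.+2), A *m x = 0 -> nvec x -> x = 0) ->
  gale_transform A B ->
  (forall i : 'I_(d.+2), row i B != 0) ->
  strongly_robust A ->
  exists S1 S2 : {set 'I_(d.+2)},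
    [/\ S1 != S2, bouquet B S1, mixed B S1, bouquet B S2 & mixed B S2].
Proof.
move=> _ Hpos [HAB HL Hinj] Hnz HSR.
pose g k := pg (B k c0) (B k c1).
pose r1 k := pr1 (B k c0) (B k c1).
pose r2 k := pr2 (B k c0) (B k c1).
pose s1 k := ps1 (B k c0) (B k c1).
pose s2 k := ps2 (B k c0) (B k c1).
have Hprops : forall k, [/\ 0 < g k, B k c0 = g k * r1 k, B k c1 = g k * r2 k
    & r1 k * s2 k - r2 k * s1 k = 1].
  move=> k; apply: prim_props.
  have := Hnz k. apply: contraNT; rewrite negb_or !negbK => /andP [/eqP H0 /eqP H1].
  apply/eqP/rowP => c; rewrite !mxE; case: (I2_cases c) => ->; [exact: H0| exact: H1].
have Hg k : 0 < g k by case: (Hprops k).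
have Hb1 k : B k c0 = g k * r1 k by case: (Hprops k).
have Hb2 k : B k c1 = g k * r2 k by case: (Hprops k).
have Hdet k : r1 k * s2 k - r2 k * s1 k = 1 by case: (Hprops k).
clearbody g r1 r2 s1 s2.
have Hspread : forall y1 y2 : int, (y1 != 0) || (y2 != 0) ->
    exists p, 0 < g p * (y1 * r1 p + y2 * r2 p).
  move=> y1 y2 Hy.
  case E : [exists p, 0 < B p c0 * y1 + B p c1 * y2].
  - move/existsP: E => [p Hp]; exists p. move: Hp; rewrite Hb1 Hb2.
    have -> : g p * r1 p * y1 + g p * r2 p * y2 = g p * (y1 * r1 p + y2 * r2 p) by ring.
    done.
  - exfalso. move/negbT: E; rewrite negb_exists => /forallP HE.
    set x := - (B *m cv2 y1 y2).
    have Hx : A *m x = 0 by rewrite /x mulmxN mulmxA HAB mul0mx oppr0.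
    have Hnx : nvec x.
      apply/forallP => k. rewrite /x mxE oppr_ge0 mul2 cv2E0 cv2E1.
      by have := HE k; rewrite -leNgt.
    have := Hpos x Hx Hnx. rewrite /x => /eqP; rewrite oppr_eq0 => /eqP /Hinj /cv2_eq0 [H1 H2].
    by move: Hy; rewrite H1 H2 eqxx.
have Hpos' : forall y1 y2 : int, (y1 != 0) || (y2 != 0) ->
    exists p, 0 < y1 * r1 p + y2 * r2 p.
  move=> y1 y2 /Hspread [p Hp]; exists p. by rewrite pmulr_rgt0 in Hp.
have Hnz1 : forall k, (r1 k != 0) \/ (r2 k != 0).
  move=> k. have := Hdet k. case: (eqVneq (r1 k) 0) => H1; last by left.
  case: (eqVneq (r2 k) 0) => H2; last by right.
  rewrite H1 H2 !mul0r subr0 => /eqP; by rewrite eq_sym oner_eq0.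
case: (classic (exists l1 l2 i, forall j, l1 * r1 j + l2 * r2 j < - (l1 * r1 i + l2 * r2 i))).
- move=> [l1 [l2 [i Hsep]]]. exfalso.
  have Hl : (l1 != 0) || (l2 != 0).
    case: (eqVneq l1 0) => E1; last by []. case: (eqVneq l2 0) => E2; last by rewrite orbT. exfalso.
    have := Hsep i; rewrite E1 E2 !mul0r addr0 oppr0 ltxx //.
  have [t1 [t2 [Ht Hw]]] := sep_sigma _ B g r1 r2 Hg Hb1 Hb2 i (s1 i) (s2 i) (Hdet i) l1 l2 Hsep (Hpos' _ _ Hl).
  exact: (witness_false _ _ A B HAB HL Hinj HSR i (g i) (r1 i) (r2 i) t1 t2 (Hg i) (Hb1 i) (Hb2 i) Ht Hw).
- move=> Hno.
  have HB : forall l1 l2 i, exists j, - (l1 * r1 i + l2 * r2 i) <= l1 * r1 j + l2 * r2 j.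
    move=> l1 l2 i.
    case E : [exists j, - (l1 * r1 i + l2 * r2 i) <= l1 * r1 j + l2 * r2 j].
    + by move/existsP: E.
    + exfalso; apply: Hno; exists l1, l2, i => j.
      move/negbT: E; rewrite negb_exists => /forallP /(_ j). by rewrite -ltNge.
  have [l1 [l2 [i1 Hu1]]] := exposed1 _ ord0 r1 r2.
  have [j1 [Ej1a Ej1b]] := exposed_mixed _ r1 r2 HB l1 l2 i1 Hu1.
  have Ha : (r1 i1 != 0) \/ (r2 i1 != 0) := Hnz1 i1.
  have Hp : exists p, 0 < r1 i1 * r2 p - r2 i1 * r1 p.
    have Hy : (- r2 i1 != 0) || (r1 i1 != 0).
      case: Ha => H; [by rewrite H orbT | by rewrite oppr_eq0 H].
    have [p Hp] := Hpos' _ _ Hy. exists p. move: Hp.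
    have -> : - r2 i1 * r1 p + r1 i1 * r2 p = r1 i1 * r2 p - r2 i1 * r1 p by ring.
    done.
  have [l1' [l2' [i2 [Hu2 HD]]]] := exposed2 _ ord0 r1 r2 (r1 i1) (r2 i1) Ha Hp.
  have [j2 [Ej2a Ej2b]] := exposed_mixed _ r1 r2 HB l1' l2' i2 Hu2.
  exists (Sdir B (r1 i1) (r2 i1)), (Sdir B (r1 i2) (r2 i2)). split.
  + apply/negP => /eqP HS.
    have : i1 \in Sdir B (r1 i1) (r2 i1) by rewrite inE Hb1 Hb2; apply/eqP; ring.
    rewrite HS inE Hb1 Hb2.
    have -> : r1 i2 * (g i1 * r2 i1) - r2 i2 * (g i1 * r1 i1)
       = - (g i1 * (r1 i1 * r2 i2 - r2 i1 * r1 i2)) by ring.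
    rewrite oppr_eq0 mulf_eq0 (gt_eqF (Hg i1)) (gt_eqF HD) //.
  + exact: (bouquet_dir _ B _ _ Ha i1 (g i1) (Hg i1) (Hb1 i1) (Hb2 i1)).
  + apply: (mixed_dir _ B _ _ i1 j1 (g i1) (g j1) (Hg i1) (Hg j1) (Hb1 i1) (Hb2 i1)).
    * by rewrite Hb1 Ej1a.
    * by rewrite Hb2 Ej1b.
  + exact: (bouquet_dir _ B _ _ (Hnz1 i2) i2 (g i2) (Hg i2) (Hb1 i2) (Hb2 i2)).
  + apply: (mixed_dir _ B _ _ i2 j2 (g i2) (g j2) (Hg i2) (Hg j2) (Hb1 i2) (Hb2 i2)).
    * by rewrite Hb1 Ej2a.
    * by rewrite Hb2 Ej2b.
Qed.
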